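(* Let $q\in\Delta_1^m$ be a prior with $q_s>0$ for all $s\in[m]$, and assume $\mathcal{W}^{\theta_1}\neq\mathcal{W}^{\theta_2}$. Then there exists a signalling scheme $\Phi\in\mathbb{R}^{m\times m}$ (column-stochastic, with $m$ signals) that is $q$-identifying, i.e. $\mathcal{Q}_\Phi=\{q\}$.
   Context: Let $\mathcal{G}=(\mathcal{V},\mathcal{E})$ be a finite directed graph with an origin $v_o$ and a destination $v_d$, and let $\mathcal{P}$ be the (finite) set of acyclic directed paths from $v_o$ to $v_d$, $n=|\mathcal{P}|$. The set of feasible path-flows is $\mathcal{H}=\{f\in\mathbb{R}^n_{\ge0}:\sum_{p\in\mathcal{P}}f_p=1\}$. For a path-flow $f$, the flow on edge $e_k$ is $f_{e_k}=\sum_{p\ni e_k}f_p$. There is a finite set of states $\Theta=\{\theta_1,\dots,\theta_m\}$, $m\ge2$; in each state $\theta_s$ each edge $e_k$ has a known cost function $C^{\theta_s}_{e_k}:\mathbb{R}_{\ge0}\to\mathbb{R}_{\ge0}$ that is continuous and strictly increasing. The cost of path $p$ in state $\theta_s$ is $C^{\theta_s}_p(f)=\sum_{e_k\in p}C^{\theta_s}_{e_k}(f_{e_k})$. For $\varphi\in\Delta_1^m:=\{x\in\mathbb{R}^m_{\ge0}:\sum_i x_i=1\}$ the expected cost of path $p$ is $C^\varphi_p(f)=\sum_{s}\varphi_sC^{\theta_s}_p(f)$. A flow $f\in\mathcal{H}$ is a $\varphi$-based Wardrop equilibrium ($\varphi$-WE) if for all $p$ with $f_p>0$ we have $C^\varphi_p(f)\le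 C^\varphi_r(f)$ for all $r\in\mathcal{P}$; $\mathcal{W}^\varphi$ denotes the set of $\varphi$-WE. For each $s$, $\varphi^{\theta_s}$ is the distribution with $\varphi^{\theta_s}_s=1$ and $\mathcal{W}^{\theta_s}:=\mathcal{W}^{\varphi^{\theta_s}}$. A (public) signalling scheme with signals $\zeta^1,\dots,\zeta^z$ is a column-stochastic matrix $\Phi=(\phi^u_s)\in\mathbb{R}^{z\times m}_{\ge0}$, where $\phi^u_s$ is the probability of sending $\zeta^u$ in state $\theta_s$. Given the prior $q$, the posterior after $\zeta^u$ (when $\sum_\ell\phi^u_\ell q_\ell>0$) is $\widetilde q^{\zeta^u}_s=\phi^u_sq_s/\sum_\ell\phi^u_\ell q_\ell$, and the observed flow under $\zeta^u$ is some $\widetilde f^{\zeta^u}\in\mathcal{W}^{\widetilde q^{\zeta^u}}$. The set $\mathcal{Q}_\Phi$ consists of all $\psi\in\Delta_1^m$ such that for every signal $u$ (with $\sum_\ell\phi^u_\ell q_\ell>0$): $\sum_s\phi^u_s(C^{\theta_s}_p(\widetilde f^{\zeta^u})-C^{\theta_s}_r(\widetilde f^{\zeta^u}))\psi_s=0$ for all $p,r$ with $\widetilde f^{\zeta^u}_p,\widetilde f^{\zeta^u}_r>0$, and $\sum_s\phi^u_s(C^{\theta_s}_p(\widetilde f^{\zeta^u})-C^{\theta_s}_r(\widetilde f^{\zeta^u}))\psi_s\le0$ for all $p,r$ with $\widetilde f^{\zeta^u}_p>0$, $\widetilde f^{\zeta^u}_r=0$. (This set does not depend on which posterior-WE are observed.)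 $\Phi$ is called $q$-identifying if $\mathcal{Q}_\Phi=\{q\}$. *)

(* Defs.v *)
From HB Require Import structures.
From mathcomp Require Import all_boot all_order all_algebra.
From mathcomp Require Import all_classical all_reals all_analysis.

Set Implicit Arguments.
Unset Strict Implicit.
Unset Printing Implicit Defensive.

Import Order.TTheory GRing.Theory Num.Theory.
Import numFieldNormedType.Exports.
Local Open Scope classical_set_scope.
Local Open Scope ring_scope.

Section Paths.
Variables (V : finType) (adj : rel V) (vo vd : V).

Definition od_path (s : seq V) : bool :=
  if s is x :: p then [&& x == vo, path adj x p, last x p == vd & uniq s]
  else false.

Definition seqs_upto (k : nat) : seq (seq V) :=
  flatten [seq [seq tval t | t <- enum {: j.-tuple V}] | j <- iota 0 k.+1].

(* an acyclic path has at most #|V| vertices, so this lists all of them *)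
Definition od_paths : seq (seq V) :=
  undup [seq s <- seqs_upto #|V| | od_path s].

Definition Path : finType := seq_sub od_paths.

Definition pedges (p : Path) : seq (V * V) := zip (val p) (behead (val p)).

End Paths.

Section Routing.
Variables (R : realType) (V : finType) (adj : rel V) (vo vd : V) (m : nat).

Local Notation P := (Path adj vo vd).

Definition edge_flow (f : P -> R) (u w : V) : R :=
  \sum_(p : P | (u, w) \in pedges p) f p.

(* cost functions: C s u w is the cost on edge (u,w) in state s *)
Variable C : 'I_m -> V -> V -> R -> R.

Definition valid_costs : Prop :=
  forall (s : 'I_m) (u w : V), adj u w ->
    [/\ {within [set x : R | 0 <= x], continuous (C s u w)},
        (forall x, 0 <= x -> 0 <= C s u w x) &
        (forall x y, 0 <= x -> x < y -> C s u w x < C s u w y)].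

Definition path_cost (s : 'I_m) (f : P -> R) (p : P) : R :=
  \sum_(e <- pedges p) C s e.1 e.2 (edge_flow f e.1 e.2).

Definition is_dist (phi : 'I_m -> R) : Prop :=
  (forall s, 0 <= phi s) /\ \sum_(s < m) phi s = 1.

Definition exp_cost (phi : 'I_m -> R) (f : P -> R) (p : P) : R :=
  \sum_(s < m) phi s * path_cost s f p.

Definition feasible (f : P -> R) : Prop :=
  (forall p, 0 <= f p) /\ \sum_(p : P) f p = 1.

Definition is_WE (phi : 'I_m -> R) (f : P -> R) : Prop :=
  feasible f /\
  forall p : P, 0 < f p -> forall r : P, exp_cost phi f p <= exp_cost phi f r.

Definition state_dist (s : 'I_m) : 'I_m -> R := fun t => (t == s)%:R.

Definition WE_state (s : 'I_m) (f : P -> R) : Prop := is_WE (state_dist s) f.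

(* column-stochastic z x m signalling matrix: Phi u s = phi^u_s *)
Definition col_stochastic (z : nat) (Phi : 'M[R]_(z, m)) : Prop :=
  (forall u s, 0 <= Phi u s) /\ forall s, \sum_(u < z) Phi u s = 1.

Definition sig_prob (z : nat) (Phi : 'M[R]_(z, m)) (q : 'I_m -> R) (u : 'I_z) : R :=
  \sum_(l < m) Phi u l * q l.

Definition posterior (z : nat) (Phi : 'M[R]_(z, m)) (q : 'I_m -> R) (u : 'I_z)
  : 'I_m -> R := fun s => Phi u s * q s / sig_prob Phi q u.

Definition observed_flows (z : nat) (Phi : 'M[R]_(z, m)) (q : 'I_m -> R)
  (ftil : 'I_z -> P -> R) : Prop :=
  forall u, 0 < sig_prob Phi q u -> is_WE (posterior Phi q u) (ftil u).

Definition cost_gap (z : nat) (Phi : 'M[R]_(z, m)) (ftil : 'I_z -> P -> R)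
  (psi : 'I_m -> R) (u : 'I_z) (p r : P) : R :=
  \sum_(s < m) Phi u s *
     (path_cost s (ftil u) p - path_cost s (ftil u) r) * psi s.

Definition in_Q (z : nat) (Phi : 'M[R]_(z, m)) (q : 'I_m -> R)
  (ftil : 'I_z -> P -> R) (psi : 'I_m -> R) : Prop :=
  is_dist psi /\
  forall u, 0 < sig_prob Phi q u ->
    forall p r : P, 0 < ftil u p ->
      (0 < ftil u r -> cost_gap Phi ftil psi u p r = 0) /\
      (ftil u r = 0 -> cost_gap Phi ftil psi u p r <= 0).

Definition q_identifying (z : nat) (Phi : 'M[R]_(z, m)) (q : 'I_m -> R) : Prop :=
  forall ftil : 'I_z -> P -> R, observed_flows Phi q ftil ->
    forall psi : 'I_m -> R, in_Q Phi q ftil psi <-> psi =1 q.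

End Routing.

(* theta_1 and theta_2 as the first two states, given 1 < m *)
Definition theta1 (m : nat) (hm : (1 < m)%N) : 'I_m := Ordinal (ltnW hm).
Definition theta2 (m : nat) (hm : (1 < m)%N) : 'I_m := Ordinal hm.

(* Main.v *)
Require Import Defs.
From HB Require Import structures.
From mathcomp Require Import all_boot all_order all_algebra.
From mathcomp Require Import all_classical all_reals all_analysis.
From mathcomp Require Import ring lra.
Import Order.TTheory GRing.Theory Num.Theory.
Local Open Scope ring_scope.
Set Implicit Arguments.
Unset Strict Implicit.
Unset Printing Implicit Defensive.
Section Sierp.
Variable R : realType.
Variable K : R -> R -> Prop.
Hypothesis Hsub : forall x t : R, K x t -> 0 <= t <= 1.
Hypothesis H1 : forall x : R, 0 <= x <= 1 -> K x x.
Hypothesis H2 : forall x t1 t2 t : R, K x t1 -> K x t2 -> t1 <= t -> t <= t2 -> K x t.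
Hypothesis H3 : forall x t : R, 0 <= x <= 1 -> 0 <= t <= 1 -> ~ K x t ->
  exists2 d : R, 0 < d & forall t' : R, 0 <= t' <= 1 -> `|t' - t| < d -> ~ K x t'.
Hypothesis H4 : forall x t u : R, 0 <= x <= 1 -> K x t -> (K t u <-> K x u).
Hypothesis H5 : ~ K 0 1.

Lemma Ksym (x t : R) : 0 <= x <= 1 -> K x t -> K t x.
Proof. by move=> hx hk; apply: (proj2 (@H4 x t x hx hk)); apply: H1. Qed.

Let S (x : R) : set R := fun t => K x t.

Lemma hsupS (x : R) : 0 <= x <= 1 -> has_sup (S x).
Proof. by move=> hx; split; [exists x; apply: H1|exists (1:R) => t /Hsub /andP[]]. Qed.

Lemma hinfS (x : R) : 0 <= x <= 1 -> has_inf (S x).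
Proof. by move=> hx; split; [exists x; apply: H1|exists (0:R) => t /Hsub /andP[]]. Qed.

Lemma le_supS (x t : R) : 0 <= x <= 1 -> K x t -> t <= sup (S x).
Proof. by move=> hx ht; apply: sup_upper_bound (hsupS hx) _ ht. Qed.

Lemma ge_infS (x t : R) : 0 <= x <= 1 -> K x t -> inf (S x) <= t.
Proof. by move=> hx ht; apply: ge_inf ((hinfS hx).2) _ ht. Qed.

Lemma K_supS (x : R) : 0 <= x <= 1 -> K x (sup (S x)).
Proof.
move=> hx; have hxs := le_supS hx (H1 hx).
have hs1 : sup (S x) <= 1.
  by apply: ge_sup; [exists x; apply: H1| move=> t /Hsub /andP[]].
have hI : 0 <= sup (S x) <= 1 by apply/andP; split => //; case/andP: hx => h0 _; apply: le_trans hxs.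
apply: contrapT => hn.
have [d d0 hd] := H3 hx hI hn.
have [e he hlt] := sup_adherent d0 (hsupS hx).
apply: (hd e (Hsub he) _ he).
have := le_supS hx he.
rewrite ltr_norml; move=> hle; apply/andP; split; lra.
Qed.

Lemma K_infS (x : R) : 0 <= x <= 1 -> K x (inf (S x)).
Proof.
move=> hx; have hxs := ge_infS hx (H1 hx).
have hs1 : 0 <= inf (S x).
  by apply: lb_le_inf; [exists x; apply: H1| move=> t /Hsub /andP[]].
have hI : 0 <= inf (S x) <= 1 by apply/andP; split => //; case/andP: hx => _ h1; apply: le_trans h1.
apply: contrapT => hn.
have [d d0 hd] := H3 hx hI hn.
have [e he hlt] := inf_adherent d0 (hinfS hx).
apply: (hd e (Hsub he) _ he).
have := ge_infS hx he.
rewrite ltr_norml; move=> hle; apply/andP; split; lra.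
Qed.


Lemma Ktrans3 (x r a : R) : 0 <= x <= 1 -> 0 <= r <= 1 -> K x a -> K r a -> K r x.
Proof.
move=> hx hr hxa hra.
by apply: (proj1 (@H4 r a x hr hra)); apply: (proj2 (@H4 x a x hx hxa)); apply: H1.
Qed.

Lemma step (x y r : R) : 0 <= x -> x < y -> y <= 1 -> ~ K x y -> 0 <= r <= 1 ->
  exists x', exists y', [/\ x <= x', x' < y', y' <= y, ~ K x' y' &
     forall t, x' <= t -> t <= y' -> ~ K r t].
Proof.
move=> x0 xy y1 nxy hr.
have hx : 0 <= x <= 1 by apply/andP; split; lra.
have hy : 0 <= y <= 1 by apply/andP; split; lra.
case: (pselect (exists z, [/\ x <= z, z <= y & K r z])); last first.
  move=> hn; exists x, y; split => // t ht1 ht2 hk; apply: hn; exists t; split => //.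
case=> z [xz zy hz].
have nboth : ~ (K r x /\ K r y).
  case=> hrx hry; apply: nxy; apply: (proj2 (@H4 r x y hr hrx)) hry.
case: (pselect (K r x)) => hrx.
-
  have hry : ~ K r y by move=> hry; apply: nboth.
  have hbmax : forall t, K r t -> t <= sup (S r) := fun t h => le_supS hr h.
  have := K_supS hr; move: hbmax; move: (sup (S r)) => b hbmax hb.
  have hzb := hbmax _ hz.
  have by_ : b < y.
    rewrite ltNge; apply/negP => hyb; apply: hry; apply: (@H2 _ _ _ _ hz hb) => //.
  have hbI := Hsub hb.
  have hamin : forall t, K y t -> inf (S y) <= t := fun t h => ge_infS hy h.
  have := K_infS hy; move: hamin; move: (inf (S y)) => a hamin ha.
  have hay := hamin _ (H1 hy).
  have hba : b < a.
    rewrite ltNge; apply/negP => hab; apply: hry.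
    have hab' : K y b by apply: (@H2 _ _ _ _ ha (H1 hy) hab); lra.
    exact: Ktrans3 hy hr hab' hb.
  exists ((a + b) / 2), y; split; try lra.
  + move=> hk; have hI : 0 <= (a + b) / 2 <= 1.
      by case/andP: hbI => hb0 hb1; apply/andP; split; lra.
    have := hamin _ (Ksym hI hk); lra.
  + move=> t ht1 ht2 hk; have := hbmax _ hk; lra.
-
  have hamin : forall t, K r t -> inf (S r) <= t := fun t h => ge_infS hr h.
  have := K_infS hr; move: hamin; move: (inf (S r)) => a hamin ha.
  have haz := hamin _ hz.
  have xa : x < a.
    rewrite ltNge; apply/negP => hax; apply: hrx; apply: (@H2 _ _ _ _ ha hz) => //.
  have haI := Hsub ha.
  have hbmax : forall t, K x t -> t <= sup (S x) := fun t h => le_supS hx h.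
  have := K_supS hx; move: hbmax; move: (sup (S x)) => b hbmax hb.
  have hxb := hbmax _ (H1 hx).
  have hba : b < a.
    rewrite ltNge; apply/negP => hab; apply: hrx.
    have hab' : K x a by apply: (@H2 _ _ _ _ (H1 hx) hb _ hab); lra.
    exact: Ktrans3 hx hr hab' ha.
  exists x, ((a + b) / 2); split; try lra.
  + move=> hk; have := hbmax _ hk; lra.
  + move=> t ht1 ht2 hk; have := hamin _ hk; lra.
Qed.


Definition Inv (xy : R * R) : Prop :=
  [/\ 0 <= xy.1, xy.1 < xy.2, xy.2 <= 1 & ~ K xy.1 xy.2].

Lemma step1 : exists x0, exists y0, [/\ 0 < x0, x0 < y0, y0 < 1 & ~ K x0 y0].
Proof.
apply: contrapT => hno.
have hall : forall x y : R, 0 < x < 1 -> 0 < y < 1 -> K x y.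
  move=> x y /andP[x0 x1] /andP[y0 y1]; apply: contrapT => nk.
  case: (ltgtP x y) => [xy|yx|exy].
  - by apply: hno; exists x, y; split.
  - apply: hno; exists y, x; split => // kyx; apply: nk; apply: Ksym kyx.
    by apply/andP; split; lra.
  - by subst; apply: nk; apply: H1; apply/andP; split; lra.
have hh : 0 <= (1/2:R) <= 1 by apply/andP; split; lra.
have hI0 : 0 <= (0:R) <= 1 by apply/andP; split; lra.
have hI1 : 0 <= (1:R) <= 1 by apply/andP; split; lra.
case: (pselect (K (1/2) 0)) => k0; case: (pselect (K (1/2) 1)) => k1.
- by apply: H5; apply: (proj2 (@H4 (1/2) 0 1 hh k0)).
- have [d d0 hd] := H3 hh hI1 k1.
  case: (lerP d (1/2)) => hdl.
  + apply: (hd (1 - d/2)); first by apply/andP; split; lra.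
      by rewrite ltr_norml; apply/andP; split; lra.
    by apply: hall; apply/andP; split; lra.
  + apply: (hd (3/4)); first by apply/andP; split; lra.
      by rewrite ltr_norml; apply/andP; split; lra.
    by apply: hall; apply/andP; split; lra.
- have [d d0 hd] := H3 hh hI0 k0.
  case: (lerP d (1/2)) => hdl.
  + apply: (hd (d/2)); first by apply/andP; split; lra.
      by rewrite ltr_norml; apply/andP; split; lra.
    by apply: hall; apply/andP; split; lra.
  + apply: (hd (1/4)); first by apply/andP; split; lra.
      by rewrite ltr_norml; apply/andP; split; lra.
    by apply: hall; apply/andP; split; lra.
- have [d d0 hd] := H3 hh hI0 k0.
  case: (lerP d (1/2)) => hdl.
  + apply: (hd (d/2)); first by apply/andP; split; lra.
      by rewrite ltr_norml; apply/andP; split; lra.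
    by apply: hall; apply/andP; split; lra.
  + apply: (hd (1/4)); first by apply/andP; split; lra.
      by rewrite ltr_norml; apply/andP; split; lra.
    by apply: hall; apply/andP; split; lra.
Qed.


Lemma sierp_main : exists p, 0 < p < 1 /\ forall t, K p t -> t = p.
Proof.
apply: contrapT => hN.
have hN' : forall p, 0 < p < 1 -> exists t, K p t /\ t <> p.
  move=> p hp; apply: contrapT => hn; apply: hN; exists p; split => // t hk.
  by apply: contrapT => htp; apply: hn; exists t.
have [x0 [y0 [hx0 hxy0 hy0 nk0]]] := step1.
pose rr (n : nat) : R := if pickle_inv n is Some q then ratr q else 0.
pose rk (n : nat) : R := if (0 <= rr n <= 1) then rr n else 0.
have rkI : forall n, 0 <= rk n <= 1.
  move=> n; rewrite /rk; case: ifP => // _; apply/andP; split; lra.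
have hstep : forall nxy : nat * (R * R), exists xy' : R * R, Inv nxy.2 ->
   [/\ Inv xy', nxy.2.1 <= xy'.1, xy'.2 <= nxy.2.2 &
       forall t, xy'.1 <= t -> t <= xy'.2 -> ~ K (rk nxy.1) t].
  move=> [n [x y]] /=; case: (pselect (Inv (x, y))); last first.
    by move=> hn; exists (x, y) => /hn.
  move=> [/= hx hxy hy nk].
  have [x' [y' [h1 h2 h3 h4 h5]]] := step hx hxy hy nk (rkI n).
  exists (x', y') => _ /=; split => //; split => //=; lra.
have [g hg] := choice hstep.
pose fix s (n : nat) : R * R := if n is k.+1 then g (k, s k) else (x0, y0).
have hs0 : Inv (s 0) by split => //=; lra.
have hsS : forall n, [/\ Inv (s n.+1), (s n).1 <= (s n.+1).1, (s n.+1).2 <= (s n).2 &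
       forall t, (s n.+1).1 <= t -> t <= (s n.+1).2 -> ~ K (rk n) t].
  elim=> [|n [ih1 ih2 ih3 ih4]].
    exact: (hg (0%N, s 0%N) hs0).
  exact: (hg (n.+1, s n.+1) ih1).
have hsI : forall n, Inv (s n) by case=> // n; case: (hsS n).
have mono : forall n k, (n <= k)%N -> (s n).1 <= (s k).1 /\ (s k).2 <= (s n).2.
  move=> n k /subnK <-; elim: (k - n)%N => [|d [ih1 ih2]]; first by rewrite add0n.
  case: (hsS (d + n)%N) => _ h1 h2 _; rewrite addSn; split; lra.
have cross : forall n k, (s n).1 <= (s k).2.
  move=> n k; have [h1 h2] := mono n (maxn n k) (leq_maxl n k).
  have [h3 h4] := mono k (maxn n k) (leq_maxr n k).
  case: (hsI (maxn n k)) => _ h5 _ _; lra.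
pose E : set R := fun t => exists n, t = (s n).1.
have hsupE : has_sup E.
  by split; [exists (s 0%N).1; exists 0%N | exists (s 0%N).2 => t [n ->]; apply: cross].
set p := sup E.
have hlo : forall n, (s n).1 <= p by move=> n; apply: sup_upper_bound hsupE _ _; exists n.
have hhi : forall n, p <= (s n).2.
  by move=> n; apply: ge_sup; [exists (s 0%N).1; exists 0%N | move=> t [k ->]; apply: cross].
have hp : 0 < p < 1.
  have := hlo 0%N; have := hhi 0%N; rewrite /=; move=> h1 h2; apply/andP; split; lra.
have [t [hkt htp]] := hN' p hp.
have hpI : 0 <= p <= 1 by case/andP: hp => h1 h2; apply/andP; split; lra.
have htI := Hsub hkt.
have [qq hkrho] : exists qq : rat, K p (ratr qq).
  case: (ltgtP p t) => h.
  - have [qq] := rat_in_itvoo h; rewrite in_itv /= => /andP[h1 h2].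
    by exists qq; apply: (@H2 _ _ _ _ (H1 hpI) hkt); lra.
  - have [qq] := rat_in_itvoo h; rewrite in_itv /= => /andP[h1 h2].
    by exists qq; apply: (@H2 _ _ _ _ hkt (H1 hpI)); lra.
  - by exfalso; apply: htp.
set rho := ratr qq : R.
have hrhoI := Hsub hkrho.
have hrk : rk (pickle qq) = rho by rewrite /rk /rr pickleK_inv hrhoI.
case: (hsS (pickle qq)) => _ _ _ hkill.
apply: (hkill p (hlo _) (hhi _)).
rewrite hrk; exact: Ksym hpI hkrho.
Qed.

End Sierp.
Lemma zip_fst_mem (V : eqType) (s t : seq V) (e : V * V) : e \in zip s t -> e.1 \in s.
Proof.
elim: s t => [|x s ih] [|y t] //= /orP[/eqP -> | h].
  by rewrite inE eqxx.
by rewrite inE (ih _ h) orbT.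
Qed.

Lemma zip_path_adj (V : eqType) (adj : rel V) (x : V) (s : seq V) :
  path adj x s -> forall e, e \in zip (x :: s) s -> adj e.1 e.2.
Proof.
elim: s x => [|y s ih] x //= /andP[hxy hp] e /orP[/eqP -> // | he].
exact: ih hp e he.
Qed.

Lemma zip_uniq (V : eqType) (x : V) (s : seq V) : uniq (x :: s) -> uniq (zip (x :: s) s).
Proof.
elim: s x => [|y s ih] x //= /andP[hx hu]; rewrite ih // andbT.
apply/negP => /zip_fst_mem /= hin; move: hx; by rewrite hin.
Qed.

Section Routing2.
Variables (R : realType) (V : finType) (adj : rel V) (vo vd : V) (m : nat).
Variable C : 'I_m -> V -> V -> R -> R.
Local Notation P := (Path adj vo vd).

Lemma od_path_val (p : P) : od_path adj vo vd (val p).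
Proof.
have := ssvalP p; rewrite /od_paths mem_undup mem_filter => /andP[] //.
Qed.

Lemma pedges_adj (p : P) e : e \in pedges p -> adj e.1 e.2.
Proof.
rewrite /pedges; have := od_path_val p; case: (val p) => [|x s] //= /and4P[_ hp _ _].
exact: zip_path_adj hp e.
Qed.

Lemma pedges_uniq (p : P) : uniq (pedges p).
Proof.
rewrite /pedges; have := od_path_val p; case: (val p) => [|x s] //= /and4P[_ _ _ hu].
exact: zip_uniq hu.
Qed.

Definition cw (w : 'I_m -> R) (e : V * V) (x : R) : R := \sum_(s < m) w s * C s e.1 e.2 x.

Lemma exp_cost_edges w f (p : P) :
  exp_cost C w f p = \sum_(e <- pedges p) cw w e (edge_flow f e.1 e.2).
Proof.
rewrite /exp_cost /path_cost /cw.
under eq_bigr => s _ do rewrite big_distrr /=.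
by rewrite exchange_big.
Qed.

Lemma sum_pedges (p : P) (F : V * V -> R) :
  \sum_(e <- pedges p) F e = \sum_(e : V * V) (e \in pedges p)%:R * F e.
Proof.
rewrite big_uniq ?pedges_uniq // big_mkcond /=; apply: eq_bigr => e _.
by case: ifP => _; rewrite ?mul1r ?mul0r.
Qed.

Lemma EX (h F : P -> R) w :
  \sum_(p : P) h p * exp_cost C w F p =
  \sum_(e : V * V) edge_flow h e.1 e.2 * cw w e (edge_flow F e.1 e.2).
Proof.
under eq_bigr => p _ do rewrite exp_cost_edges sum_pedges big_distrr /=.
rewrite exchange_big; apply: eq_bigr => e _.
have -> : edge_flow h e.1 e.2 = \sum_(p | e \in pedges p) h p.
  by rewrite /edge_flow -surjective_pairing.
rewrite big_distrl /= [RHS]big_mkcond /=.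
apply: eq_bigr => p _; case: ifP => _; rewrite ?mul1r ?mul0r ?mulr0 //.
Qed.


Lemma WE_feas w (f : P -> R) : is_WE C w f -> feasible f.
Proof. by case. Qed.

Lemma WE_mean_le w (g : P -> R) : is_WE C w g -> forall r : P,
  \sum_(p : P) g p * exp_cost C w g p <= exp_cost C w g r.
Proof.
move=> [[g0 g1] hg] r.
have -> : exp_cost C w g r = \sum_(p : P) g p * exp_cost C w g r.
  by rewrite -big_distrl /= g1 mul1r.
apply: ler_sum => p _; have := g0 p; rewrite le0r => /orP[/eqP -> | hp].
  by rewrite !mul0r.
by apply: ler_wpM2l; [exact: ltW | apply: hg].
Qed.

Lemma VI w (f g : P -> R) : is_WE C w f -> feasible g ->
  \sum_(p : P) f p * exp_cost C w f p <= \sum_(p : P) g p * exp_cost C w f p.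
Proof.
move=> hf [g0 g1].
have -> : \sum_(p : P) f p * exp_cost C w f p =
  \sum_(r : P) g r * \sum_(p : P) f p * exp_cost C w f p.
  by rewrite -big_distrl /= g1 mul1r.
apply: ler_sum => r _; apply: ler_wpM2l => //; exact: WE_mean_le.
Qed.

Lemma edge_flow_ge0 (f : P -> R) u v : feasible f -> 0 <= edge_flow f u v.
Proof. by move=> [f0 _]; apply: sumr_ge0 => p _; apply: f0. Qed.

Lemma edge_flowB (f g : P -> R) u v :
  edge_flow (fun p => f p - g p) u v = edge_flow f u v - edge_flow g u v.
Proof. by rewrite /edge_flow sumrB. Qed.

Lemma edge_flow_nopath (f : P -> R) (e : V * V) : ~~ [exists p : P, e \in pedges p] ->
  edge_flow f e.1 e.2 = 0.
Proof.
move=> hn; rewrite /edge_flow -surjective_pairing big_pred0 // => p.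
by apply/negP => hp; move/negP: hn; apply; apply/existsP; exists p.
Qed.

Lemma cw_strict w (e : V * V) : valid_costs adj C -> (forall s, 0 <= w s) ->
  0 < \sum_(s < m) w s -> adj e.1 e.2 ->
  forall x y, 0 <= x -> x < y -> cw w e x < cw w e y.
Proof.
move=> hC w0 wpos he x y x0 xy; rewrite -subr_gt0 /cw -sumrB.
have hterm : forall s : 'I_m, 0 <= w s * C s e.1 e.2 y - w s * C s e.1 e.2 x.
  move=> s; rewrite -mulrBr mulr_ge0 // subr_ge0; have [_ _ hs] := hC s _ _ he.
  exact: ltW (hs _ _ x0 xy).
rewrite lt0r sumr_ge0 ?andbT //; apply/eqP => hs0.
have h0 := psumr_eq0P (fun s _ => hterm s) hs0.
move: wpos; rewrite big1 ?ltxx // => s _.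
have := h0 s isT; rewrite -mulrBr => /eqP; rewrite mulf_eq0 => /orP[/eqP // | ].
have [_ _ hs] := hC s _ _ he; rewrite subr_eq0 => /eqP hxy.
by have := hs _ _ x0 xy; rewrite hxy ltxx.
Qed.

Lemma mono_term (c : R -> R) a b : 0 <= a -> 0 <= b ->
  (forall x y, 0 <= x -> x < y -> c x < c y) ->
  0 <= (a - b) * (c a - c b) /\ ((a - b) * (c a - c b) = 0 -> a = b).
Proof.
move=> a0 b0 hc; case: (ltgtP a b) => h.
- have := hc _ _ a0 h => hc'.
  have hp : 0 < (a - b) * (c a - c b).
    by rewrite -mulrNN mulr_gt0 // oppr_gt0 subr_lt0.
  by split; [exact: ltW | move=> h0; move: hp; rewrite h0 ltxx].
- have := hc _ _ b0 h => hc'.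
  have hp : 0 < (a - b) * (c a - c b) by rewrite mulr_gt0 // subr_gt0.
  by split; [exact: ltW | move=> h0; move: hp; rewrite h0 ltxx].
- by subst; rewrite subrr mul0r.
Qed.

Lemma WE_unique w (f g : P -> R) : valid_costs adj C -> (forall s, 0 <= w s) ->
  0 < \sum_(s < m) w s -> is_WE C w f -> is_WE C w g ->
  forall u v, edge_flow f u v = edge_flow g u v.
Proof.
move=> hC w0 wpos hf hg.
have A := VI hf (WE_feas hg). have B := VI hg (WE_feas hf).
pose T (e : V * V) := (edge_flow f e.1 e.2 - edge_flow g e.1 e.2) *
   (cw w e (edge_flow f e.1 e.2) - cw w e (edge_flow g e.1 e.2)).
have hT : \sum_(e : V * V) T e <= 0.
  have -> : \sum_(e : V * V) T e =
    \sum_(p : P) (f p - g p) * exp_cost C w f p - \sum_(p : P) (f p - g p) * exp_cost C w g p.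
    rewrite (EX (fun p => f p - g p) f) (EX (fun p => f p - g p) g) -sumrB.
    by apply: eq_bigr => e _; rewrite /T edge_flowB mulrBr.
  rewrite !(eq_bigr _ (fun p _ => mulrBl (exp_cost C w _ p) (f p) (g p))) !sumrB; lra.
have hTe : forall e, 0 <= T e /\ (T e = 0 -> edge_flow f e.1 e.2 = edge_flow g e.1 e.2).
  move=> e; case: (boolP [exists p : P, e \in pedges p]) => hex; last first.
    by rewrite /T !edge_flow_nopath // subrr mul0r.
  have [p hp] := existsP hex.
  apply: mono_term; [exact: edge_flow_ge0 (WE_feas hf) | exact: edge_flow_ge0 (WE_feas hg) |].
  exact: cw_strict hC w0 wpos (pedges_adj hp).
have hT0 : \sum_(e : V * V) T e = 0.
  by apply/eqP; rewrite eq_le hT sumr_ge0 // => e _; case: (hTe e).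
move=> u v; have h0 := psumr_eq0P (fun e _ => (hTe e).1) hT0; have := h0 (u, v) isT.
exact: (hTe (u, v)).2.
Qed.

Lemma exp_cost_eq w (f g : P -> R) (p : P) : (forall u v, edge_flow f u v = edge_flow g u v) ->
  exp_cost C w f p = exp_cost C w g p.
Proof.
by move=> he; rewrite !exp_cost_edges; apply: eq_bigr => e _; rewrite he.
Qed.

Lemma WE_transfer w (f g : P -> R) : feasible f -> (forall u v, edge_flow f u v = edge_flow g u v) ->
  is_WE C w g -> is_WE C w f.
Proof.
move=> [f0 f1] he hg; split => //.
set mu := \sum_(p : P) g p * exp_cost C w g p.
have hmu := WE_mean_le hg.
have hfm : \sum_(p : P) f p * exp_cost C w g p = mu.
  rewrite /mu !EX; apply: eq_bigr => e _; by rewrite he.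
have hz : \sum_(p : P) f p * (exp_cost C w g p - mu) = 0.
  rewrite (eq_bigr _ (fun p _ => mulrBr (f p) (exp_cost C w g p) mu)) sumrB hfm.
  by rewrite -big_distrl /= f1 mul1r subrr.
have hnn : forall p : P, 0 <= f p * (exp_cost C w g p - mu).
  by move=> p; rewrite mulr_ge0 // subr_ge0.
move=> p fp r; rewrite !(exp_cost_eq w p he) (exp_cost_eq w r he).
have h0 := psumr_eq0P (fun p _ => hnn p) hz; have := h0 p isT => /eqP; rewrite mulf_eq0.
case/orP => [/eqP hf0 | ]; first by move: fp; rewrite hf0 ltxx.
by rewrite subr_eq0 => /eqP ->; apply: hmu.
Qed.

Lemma exp_cost_scale w v k (f : P -> R) (p : P) : (forall s, w s = k * v s) ->
  exp_cost C w f p = k * exp_cost C v f p.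
Proof.
move=> hw; rewrite /exp_cost big_distrr /=; apply: eq_bigr => s _.
by rewrite hw mulrA.
Qed.

Lemma WE_scale w v k (f : P -> R) : 0 < k -> (forall s, w s = k * v s) -> is_WE C w f -> is_WE C v f.
Proof.
move=> k0 hw [hf hwe]; split => // p fp r.
have := hwe p fp r; rewrite !(exp_cost_scale _ _ hw) ler_pM2l //.
Qed.

Lemma WE_ext w v (f : P -> R) : (forall s, w s = v s) -> is_WE C w f -> is_WE C v f.
Proof.
move=> hw; apply: (@WE_scale w v 1) => //; by move=> s; rewrite mul1r.
Qed.

End Routing2.

Lemma sum_delta (R : realType) (m : nat) (a : 'I_m -> R) (k : 'I_m) :
  \sum_(s < m) (s == k)%:R * a s = a k.
Proof.
rewrite (bigD1 k) //= eqxx mul1r big1 ?addr0 // => s /negbTE ->; by rewrite mul0r.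
Qed.

Section Key.
Variables (R : realType) (V : finType) (adj : rel V) (vo vd : V) (m : nat).
Variable C : 'I_m -> V -> V -> R -> R.
Hypothesis hC : valid_costs adj C.
Local Notation P := (Path adj vo vd).
Variables (j u : 'I_m).
Hypothesis hju : j != u.

Definition seg (t : R) : 'I_m -> R := fun s => (s == u)%:R * t + (s == j)%:R * (1 - t).

Lemma seg_ge0 t : 0 <= t <= 1 -> forall s, 0 <= seg t s.
Proof.
move=> /andP[t0 t1] s; rewrite /seg; apply: addr_ge0; apply: mulr_ge0 => //; lra.
Qed.

Lemma seg_sum t : \sum_(s < m) seg t s = 1.
Proof.
rewrite /seg big_split /= (sum_delta (fun _ => t)) (sum_delta (fun _ => 1 - t)); lra.
Qed.

Lemma seg_pos t : 0 <= t <= 1 -> 0 < \sum_(s < m) seg t s.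
Proof. by move=> _; rewrite seg_sum ltr01. Qed.

Lemma exp_cost_seg t (f : P -> R) p :
  exp_cost C (seg t) f p = t * path_cost C u f p + (1 - t) * path_cost C j f p.
Proof.
rewrite /exp_cost /seg.
under eq_bigr => s _ do rewrite mulrDl -!mulrA.
rewrite big_split /=.
by rewrite (sum_delta (fun s => t * path_cost C s f p)) (sum_delta (fun s => (1 - t) * path_cost C s f p)).
Qed.

Lemma seg_convex (f : P -> R) t1 t2 t : is_WE C (seg t1) f -> is_WE C (seg t2) f ->
  t1 <= t -> t <= t2 -> is_WE C (seg t) f.
Proof.
move=> [hf h1] [_ h2] ht1 ht2; split => // p fp r.
have := h1 p fp r; have := h2 p fp r; rewrite !exp_cost_seg.
set Ap := path_cost C u f p; set Ar := path_cost C u f r.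
set Bp := path_cost C j f p; set Br := path_cost C j f r.
move=> e2 e1.
have E : forall s, s * Ap + (1 - s) * Bp <= s * Ar + (1 - s) * Br =
   (s * ((Ap - Ar) - (Bp - Br)) + (Bp - Br) <= 0).
  by move=> s; rewrite -subr_le0; congr (_ <= _); ring.
move: e1 e2; rewrite !E; set a := (Ap - Ar) - (Bp - Br); set b := Bp - Br.
move=> e1 e2.
case: (lerP 0 a) => ha.
- have : t * a <= t2 * a by apply: ler_wpM2r.
  lra.
- have : t * a <= t1 * a by rewrite ler_wnM2r // ltW.
  lra.
Qed.

Lemma state_dist_ge0 (s : 'I_m) : forall k, 0 <= state_dist R s k.
Proof. by move=> k; rewrite /state_dist ler0n. Qed.

Lemma state_dist_pos (s : 'I_m) : 0 < \sum_(k < m) state_dist R s k.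
Proof.
rewrite /state_dist (eq_bigr (fun k => (k == s)%:R * (1:R))); last by move=> k _; rewrite mulr1.
by rewrite (sum_delta (fun _ => (1:R))) ltr01.
Qed.

Lemma key : ~ (forall f : P -> R, is_WE C (state_dist R j) f <-> is_WE C (state_dist R u) f) ->
  exists p, 0 <= p <= 1 /\ ((forall f : P -> R, ~ is_WE C (seg p) f) \/
     (0 < p < 1 /\ forall f : P -> R, is_WE C (seg p) f ->
        forall t, 0 <= t <= 1 -> is_WE C (seg t) f -> t = p)).
Proof.
move=> hne.
case: (pselect (exists p, 0 <= p <= 1 /\ forall f : P -> R, ~ is_WE C (seg p) f)).
  by move=> [p [hp hn]]; exists p; split => //; left.
move=> hne2.
have hF : forall t, exists f : P -> R, 0 <= t <= 1 -> is_WE C (seg t) f.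
  move=> t; case: (pselect (0 <= t <= 1)) => ht; last by exists (fun _ => 0).
  apply: contrapT => hn; apply: hne2; exists t; split => // f hf; apply: hn; by exists f => _.
have [F hFt] := choice hF.
pose K (x t : R) := 0 <= t <= 1 /\ is_WE C (seg t) (F x).
have uniq_seg : forall t (f g : P -> R), 0 <= t <= 1 -> is_WE C (seg t) f -> is_WE C (seg t) g ->
    forall a b, edge_flow f a b = edge_flow g a b.
  move=> t f g ht hf hg; exact: WE_unique hC (seg_ge0 ht) (seg_pos ht) hf hg.
have hsub : forall x t : R, K x t -> 0 <= t <= 1 by move=> x t [].
have h1 : forall x : R, 0 <= x <= 1 -> K x x by move=> x hx; split => //; apply: hFt.
have h2 : forall x t1 t2 t : R, K x t1 -> K x t2 -> t1 <= t -> t <= t2 -> K x t.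
  move=> x t1 t2 t [ht1 k1] [ht2 k2] a1 a2; split; last exact: seg_convex k1 k2 a1 a2.
  case/andP: ht1 => ? ?; case/andP: ht2 => ? ?; apply/andP; split; lra.
have h3 : forall x t : R, 0 <= x <= 1 -> 0 <= t <= 1 -> ~ K x t ->
    exists2 d : R, 0 < d & forall t' : R, 0 <= t' <= 1 -> `|t' - t| < d -> ~ K x t'.
  move=> x t hx ht nk.
  have hfx := hFt x hx.
  have [p [r [fp hgt]]] : exists p r, 0 < F x p /\ exp_cost C (seg t) (F x) r < exp_cost C (seg t) (F x) p.
    apply: contrapT => hn; apply: nk; split => //; split; first exact: (WE_feas hfx).
    move=> p fp r; rewrite leNgt; apply/negP => hlt; apply: hn; exists p, r; by split.
  move: hgt; rewrite !exp_cost_seg.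
  set Ap := path_cost C u (F x) p; set Ar := path_cost C u (F x) r.
  set Bp := path_cost C j (F x) p; set Br := path_cost C j (F x) r.
  set a := (Ap - Ar) - (Bp - Br); set b := Bp - Br.
  have E : forall s, s * Ar + (1 - s) * Br < s * Ap + (1 - s) * Bp = (0 < s * a + b).
    by move=> s; rewrite -subr_gt0; congr (_ < _); rewrite /a /b; ring.
  rewrite E => hg.
  have hna : 0 < `|a| + 1 by rewrite ltr_wpDl.
  exists ((t * a + b) / (`|a| + 1)); first by rewrite divr_gt0.
  move=> t' ht' hd [_ hk].
  have := hk.2 p fp r; rewrite !exp_cost_seg -/Ap -/Ar -/Bp -/Br leNgt E; apply/negP/negPn.
  move: hd; rewrite ltr_pdivlMr // => hd.
  have hn1 : - (`|t' - t| * `|a|) <= (t' - t) * a.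
    by rewrite -normrM; have := ler_norm (- ((t' - t) * a)); rewrite normrN; lra.
  have hn2 : `|t' - t| * `|a| <= `|t' - t| * (`|a| + 1).
    by rewrite ler_wpM2l // lerDl.
  have -> : t' * a + b = (t * a + b) + (t' - t) * a by ring.
  lra.
have h4 : forall x t u' : R, 0 <= x <= 1 -> K x t -> (K t u' <-> K x u').
  move=> x t u' hx [ht kt].
  have he := uniq_seg t _ _ ht kt (hFt t ht).
  split => -[hu' ku]; split => //.
  - exact: WE_transfer (WE_feas (hFt x hx)) he ku.
  - apply: WE_transfer (WE_feas (hFt t ht)) _ ku => a b; by rewrite he.
have h5 : ~ K 0 1.
  move=> [_ k01]; apply: hne.
  have h0I : 0 <= (0:R) <= 1 by rewrite lexx ler01.
  have hj : is_WE C (state_dist R j) (F 0).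
    apply: WE_ext (hFt 0 h0I) => s; rewrite /seg /state_dist; lra.
  have hu : is_WE C (state_dist R u) (F 0).
    apply: WE_ext k01 => s; rewrite /seg /state_dist; lra.
  move=> f; split => hf.
  - have he := WE_unique hC (@state_dist_ge0 j) (state_dist_pos j) hf hj.
    by apply: WE_transfer (WE_feas hf) he hu.
  - have he := WE_unique hC (@state_dist_ge0 u) (state_dist_pos u) hf hu.
    by apply: WE_transfer (WE_feas hf) he hj.
have [p [hp hrig]] := @sierp_main R K hsub h1 h2 h3 h4 h5.
have hpI : 0 <= p <= 1 by case/andP: hp => ? ?; apply/andP; split; lra.
exists p; split => //; right; split => // f hf t ht hft.
apply: hrig; split => //.
have he := uniq_seg p _ _ hpI (hFt p hpI) hf.
exact: WE_transfer (WE_feas (hFt p hpI)) he hft.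
Qed.

End Key.

Section Signals.
Variables (R : realType) (V : finType) (adj : rel V) (vo vd : V) (m : nat).
Variable C : 'I_m -> V -> V -> R -> R.
Local Notation P := (Path adj vo vd).
Variable z : nat.
Variable Phi : 'M[R]_(z, m).

Lemma gap_alt (ftil : 'I_z -> P -> R) psi u p r :
  cost_gap C Phi ftil psi u p r =
  exp_cost C (fun s => Phi u s * psi s) (ftil u) p - exp_cost C (fun s => Phi u s * psi s) (ftil u) r.
Proof.
by rewrite /cost_gap /exp_cost -sumrB; apply: eq_bigr => s _; ring.
Qed.

Lemma inQ_WE q (ftil : 'I_z -> P -> R) psi u :
  in_Q C Phi q ftil psi -> 0 < sig_prob Phi q u -> feasible (ftil u) ->
  is_WE C (fun s => Phi u s * psi s) (ftil u).
Proof.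
move=> [_ hQ] hsp hf; split => // p fp r; rewrite -subr_le0 -gap_alt.
have [h1 h2] := hQ u hsp p r fp.
case: hf => f0 _; have := f0 r; rewrite le0r => /orP[/eqP h0 | hr].
  exact: h2 h0.
by rewrite h1.
Qed.

Lemma post_gap q (ftil : 'I_z -> P -> R) u p r : 0 < sig_prob Phi q u ->
  cost_gap C Phi ftil q u p r = sig_prob Phi q u *
   (exp_cost C (posterior Phi q u) (ftil u) p - exp_cost C (posterior Phi q u) (ftil u) r).
Proof.
move=> hsp; rewrite gap_alt mulrBr.
have hw : forall s, Phi u s * q s = sig_prob Phi q u * posterior Phi q u s.
  move=> s; rewrite /posterior mulrCA divff ?mulr1 //; exact: lt0r_neq0.
by rewrite (exp_cost_scale C (ftil u) p hw) (exp_cost_scale C (ftil u) r hw).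
Qed.

Lemma q_in_Q q (ftil : 'I_z -> P -> R) : is_dist q -> observed_flows C Phi q ftil ->
  in_Q C Phi q ftil q.
Proof.
move=> hq hobs; split => // u hsp p r fp.
have [_ hwe] := hobs u hsp.
have hpr := hwe p fp r.
split.
- move=> fr; have hrp := hwe r fr p.
  rewrite post_gap //; have -> : exp_cost C (posterior Phi q u) (ftil u) p =
     exp_cost C (posterior Phi q u) (ftil u) r by apply/eqP; rewrite eq_le hpr hrp.
  by rewrite subrr mulr0.
- move=> _; rewrite post_gap // pmulr_rle0 // subr_le0 //.
Qed.

End Signals.

Unset Implicit Arguments.

Theorem proposition1 (R : realType) (V : finType) (adj : rel V) (vo vd : V)
  (m : nat) (hm : (1 < m)%N) (C : 'I_m -> V -> V -> R -> R)
  (hC : valid_costs adj C)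
  (q : 'I_m -> R) (hq : is_dist q) (hqpos : forall s, 0 < q s)
  (hW : ~ (forall f : Path adj vo vd -> R,
            WE_state C (theta1 hm) f <-> WE_state C (theta2 hm) f)) :
  exists Phi : 'M[R]_(m, m), col_stochastic Phi /\ q_identifying adj vo vd C Phi q.
Proof.
set i0 := theta1 hm. set i1 := theta2 hm.
have hi01 : i0 != i1.
  by apply/eqP => h; have := congr1 (@nat_of_ord m) h; rewrite /i0 /i1 /theta1 /theta2 /=.
have hW' : ~ (forall f : Path adj vo vd -> R,
    is_WE C (state_dist R i0) f <-> is_WE C (state_dist R i1) f) := hW.
have hpart : forall u : 'I_m, u != i0 -> exists jj : 'I_m, [/\ jj != u, (jj = i0 \/ jj = i1) &
    ~ (forall f : Path adj vo vd -> R,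
         is_WE C (state_dist R jj) f <-> is_WE C (state_dist R u) f)].
  move=> u hu; case: (eqVneq u i1) => [-> | hu1].
    by exists i0; split => //; left.
  case: (pselect (forall f : Path adj vo vd -> R,
         is_WE C (state_dist R i0) f <-> is_WE C (state_dist R u) f)) => h.
  - exists i1; split; [by rewrite eq_sym | by right | ].
    move=> h'; apply: hW' => f; split => hf.
    + exact: (proj2 (h' f)) ((proj1 (h f)) hf).
    + exact: (proj2 (h f)) ((proj1 (h' f)) hf).
  - by exists i0; split => //; [rewrite eq_sym | left].
have hdata : forall u : 'I_m, exists d : 'I_m * R, u != i0 ->
   [/\ d.1 != u, (d.1 = i0 \/ d.1 = i1), 0 <= d.2 <= 1 &
     ((forall f : Path adj vo vd -> R, ~ is_WE C (seg d.1 u d.2) f) \/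
      (0 < d.2 < 1 /\ forall f : Path adj vo vd -> R, is_WE C (seg d.1 u d.2) f ->
          forall t, 0 <= t <= 1 -> is_WE C (seg d.1 u t) f -> t = d.2))].
  move=> u; case: (boolP (u != i0)) => hu; last by exists (i0, 0).
  have [jj [hjj hj01 hne]] := hpart u hu.
  have [p [hp hdisj]] := key hC hne.
  by exists (jj, p).
have [D hD] := choice hdata.
pose J u := (D u).1. pose pp u := (D u).2.
have hq0 : forall s, 0 <= q s by move=> s; apply: ltW.
have hq1 : forall s, q s <= 1.
  move=> s; case: hq => _ hs1; rewrite -hs1 (bigD1 s) //= lerDl.
  by apply: sumr_ge0 => i _.
have hmR : 0 < (m%:R : R) by rewrite ltr0n; move: (hm); apply: leq_trans.
pose a (v : 'I_m) : R := q (J v) * pp v / m%:R.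
pose b (v : 'I_m) : R := q v * (1 - pp v) / m%:R.
pose E (v s : 'I_m) : R := if v == i0 then 0 else (s == v)%:R * a v + (s == J v)%:R * b v.
have hJ : forall v, v != i0 -> J v != v by move=> v hv; case: (hD v hv).
have hJ01 : forall v, v != i0 -> J v = i0 \/ J v = i1 by move=> v hv; case: (hD v hv).
have hpI : forall v, v != i0 -> 0 <= pp v <= 1 by move=> v hv; case: (hD v hv).
have hab : forall v, v != i0 -> [/\ 0 <= a v, a v <= 1 / m%:R, 0 <= b v & b v <= 1 / m%:R].
  move=> v hv; have /andP[p0 p1] := hpI v hv.
  have hi : 0 < (m%:R : R)^-1 by rewrite invr_gt0.
  rewrite /a /b; split.
  - by rewrite !mulr_ge0 // ltW.
  - by rewrite ler_pM2r // mulr_ile1 //; lra.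
  - by rewrite !mulr_ge0 ?invr_ge0 ?ler0n ?hq0 // subr_ge0.
  - by rewrite ler_pM2r // mulr_ile1 //; lra.
have hE0 : forall v s, 0 <= E v s.
  move=> v s; rewrite /E; case: ifP => // /negbT hv.
  by have [? _ ? _] := hab v hv; apply: addr_ge0; apply: mulr_ge0.
have hE1 : forall v s, E v s <= 1 / m%:R.
  move=> v s; rewrite /E; case: ifP => [_ | /negbT hv]; first by rewrite divr_ge0.
  have [? ? ? ?] := hab v hv.
  case: (eqVneq s v) => [-> | hsv].
    by rewrite eq_sym (negbTE (hJ v hv)) /= mul0r addr0 mulr1n mul1r.
  have h1m : 0 <= 1 / (m%:R : R) by rewrite divr_ge0 // ler0n.
  rewrite mul0r add0r; case: (s == J v) => /=; rewrite ?mulr1n ?mulr0n; lra.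
have hsumE : forall s, \sum_(w < m) E w s <= 1.
  move=> s; apply: le_trans (ler_sum _ (fun w _ => hE1 w s)) _.
  rewrite sumr_const card_ord -[_ *+ m]mulr_natr divfK //; exact: lt0r_neq0.
pose Phi : 'M[R]_(m, m) := \matrix_(v, s) (if v == i0 then 1 - \sum_(w < m) E w s else E v s).
have hPhi : forall v s, v != i0 -> Phi v s = E v s.
  by move=> v s hv; rewrite mxE (negbTE hv).
exists Phi; split.
  split.
  - move=> v s; rewrite mxE; case: ifP => _; last exact: hE0.
    by rewrite subr_ge0.
  - move=> s; rewrite (bigD1 i0) //= mxE eqxx.
    have hE00 : E i0 s = 0 by rewrite /E eqxx.
    have hsP : \sum_(i < m | i != i0) Phi i s = \sum_(i < m | i != i0) E i s.
      by apply: eq_bigr => v hv; exact: hPhi.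
    by rewrite hsP (bigD1 i0) //= hE00 add0r subrK.
move=> ftil hobs psi; split; last first.
  move=> hpsi; have [hd hQq] := q_in_Q hq hobs.
  split.
  - case: hq => hq0' hq1'; split; first by move=> s; rewrite hpsi.
    by rewrite (eq_bigr _ (fun s _ => hpsi s)).
  - move=> u hsp p r fp.
    have -> : cost_gap C Phi ftil psi u p r = cost_gap C Phi ftil q u p r.
      by apply: eq_bigr => s _; rewrite hpsi.
    exact: hQq u hsp p r fp.
move=> hQ.
have [[hpsi0 hpsi1] _] := hQ.
have hrel : forall v, v != i0 -> psi v * q (J v) = psi (J v) * q v.
  move=> v hv.
  have hJv := hJ v hv. have /andP[p0 p1] := hpI v hv.
  have hqv := hqpos v; have hqJ := hqpos (J v).
  have hm0 : (m%:R : R) != 0 by apply: lt0r_neq0.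
  have hqv0 : q v != 0 by apply: lt0r_neq0.
  have hqJ0 : q (J v) != 0 by apply: lt0r_neq0.
  have hsp : sig_prob Phi q v = q v * q (J v) / m%:R.
    rewrite /sig_prob (eq_bigr (fun l => E v l * q l)); last by move=> l _; rewrite hPhi.
    rewrite /E (negbTE hv).
    under eq_bigr => l _ do rewrite mulrDl -!mulrA.
    rewrite big_split /= !sum_delta.
    by rewrite /a /b; field; rewrite ?hm0 ?hqJ0 ?hqv0 ?hS.
  have hsp0 : 0 < sig_prob Phi q v.
    by rewrite hsp; apply: divr_gt0 => //; apply: mulr_gt0.
  have hWE := hobs v hsp0.
  have hseg : is_WE C (seg (J v) v (pp v)) (ftil v).
    apply: WE_ext hWE => s; rewrite /posterior hsp mxE (negbTE hv) /E (negbTE hv) /seg.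
    case: (eqVneq s v) => [-> | hsv].
      by rewrite eq_sym (negbTE hJv) /= /a; field; rewrite ?hm0 ?hqJ0 ?hqv0 ?hS.
    case: (eqVneq s (J v)) => [-> | hsJ].
      by rewrite /= /b; field; rewrite ?hm0 ?hqJ0 ?hqv0 ?hS.
    by rewrite /=; field; rewrite ?hm0 ?hqJ0 ?hqv0 ?hS.
  have [_ _ _ [hnone | [hpp hrig]]] := hD v hv.
    by exfalso; apply: (hnone _ hseg).
  have hWp := inQ_WE hQ hsp0 (WE_feas hWE).
  have /andP[pp0 pp1] : 0 < pp v < 1 := hpp.
  have ha0 : 0 < a v by rewrite /a; apply: divr_gt0 => //; apply: mulr_gt0.
  have hb0 : 0 < b v by rewrite /b; apply: divr_gt0 => //; apply: mulr_gt0; lra.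
  have hX0 : 0 <= a v * psi v by apply: mulr_ge0 => //; apply: ltW.
  have hY0 : 0 <= b v * psi (J v) by apply: mulr_ge0 => //; apply: ltW.
  set S := a v * psi v + b v * psi (J v).
  case: (eqVneq S 0) => hS.
    have hX : a v * psi v = 0 by move: hS; rewrite /S; lra.
    have hY : b v * psi (J v) = 0 by move: hS; rewrite /S; lra.
    move/eqP: hX; rewrite mulf_eq0 (negbTE (lt0r_neq0 ha0)) /= => /eqP ->.
    move/eqP: hY; rewrite mulf_eq0 (negbTE (lt0r_neq0 hb0)) /= => /eqP ->.
    by rewrite !mul0r.
  have hSpos : 0 < S by rewrite lt0r hS /S addr_ge0.
  set t' := a v * psi v / S.
  have hw : forall s, Phi v s * psi s = S * seg (J v) v t' s.
    move=> s; rewrite hPhi // /E (negbTE hv) /seg /t'.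
    case: (eqVneq s v) => [-> | hsv].
      by rewrite eq_sym (negbTE hJv) /=; field; rewrite ?hm0 ?hqJ0 ?hqv0 ?hS.
    case: (eqVneq s (J v)) => [-> | hsJ].
      by rewrite /= /S; field; rewrite ?hm0 ?hqJ0 ?hqv0 ?hS.
    by rewrite /=; field; rewrite ?hm0 ?hqJ0 ?hqv0 ?hS.
  have hWt := WE_scale hSpos hw hWp.
  have ht'I : 0 <= t' <= 1.
    apply/andP; split; first by apply: divr_ge0 => //; apply: ltW.
    by rewrite /t' ler_pdivrMr // mul1r /S lerDl.
  have ht' : t' = pp v := hrig _ hseg t' ht'I hWt.
  have E1 : a v * psi v = pp v * S.
    by rewrite -ht' /t' mulrC divfK.
  move: E1; rewrite /S /a /b => E1.
  have hk : pp v * (1 - pp v) / m%:R * (psi v * q (J v) - psi (J v) * q v) = 0.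
    have h0 : q (J v) * pp v / m%:R * psi v - pp v * (q (J v) * pp v / m%:R * psi v +
       q v * (1 - pp v) / m%:R * psi (J v)) = 0 by rewrite {1}E1 subrr.
    by rewrite -h0; ring.
  move/eqP: hk; rewrite mulf_eq0 => /orP[|]; last by rewrite subr_eq0 => /eqP.
  rewrite !mulf_eq0 invr_eq0 (negbTE hm0) orbF => /orP[/eqP h | /eqP h]; lra.
have hi10 : i1 != i0 by rewrite eq_sym.
have hJi1 : J i1 = i0.
  by case: (hJ01 i1 hi10) => // h; move: (hJ i1 hi10); rewrite h eqxx.
have hchain : forall v, psi v * q i0 = psi i0 * q v.
  move=> v; case: (eqVneq v i0) => [-> | hv]; first by rewrite mulrC.
  have hr := hrel v hv; case: (hJ01 v hv) => hJv; first by rewrite hJv in hr.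
  rewrite hJv in hr.
  have hr1 := hrel i1 hi10; rewrite hJi1 in hr1.
  apply: (mulIf (lt0r_neq0 (hqpos i1))).
  have e1 : psi v * q i0 * q i1 = psi i1 * q v * q i0 by rewrite -hr; ring.
  have e2 : psi i1 * q v * q i0 = psi i0 * q v * q i1 by rewrite mulrAC hr1; ring.
  by rewrite e1 e2.
have hp0 : psi i0 = q i0.
  have : \sum_(v < m) psi v * q i0 = \sum_(v < m) psi i0 * q v.
    by apply: eq_bigr => v _; exact: hchain v.
  by rewrite -big_distrl -big_distrr /= hpsi1 (proj2 hq) mul1r mulr1.
move=> v; have := hchain v; rewrite hp0 => h.
apply: (mulIf (lt0r_neq0 (hqpos i0))); by rewrite h mulrC.
Qed.
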